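(* Let $(G,V^\infty,T,k)$ be an instance of \textsc{OddMultiwayNodeCut} with $G$ a DAG, and let $M$ be a solution. Suppose there exists $v\in r_G(M)$ such that $M$ contains no important $v\rightarrow T$ separator. Then there exists a solution $M'$ such that: - $|M'|\le|M|$; - $r_G(M)\cup f_G(M)\cup M\subseteq r_G(M')\cup f_G(M')\cup M'$; - $r_G(M)\subsetneq r_G(M')$.
   Context: Paths are simple directed paths; a path is odd if it has an odd number of edges. An instance $(G,V^\infty,T,k)$ of \textsc{OddMultiwayNodeCut} consists of a DAG $G$, protected nodes $V^\infty\subseteq V(G)$, terminals $T\subseteq V^\infty$ and $k\in\mathbb{Z}_+$. A $T$-path has both ends in $T$. A solution is a set $M\subseteq V(G)\setminus V^\infty$ intersecting every odd $T$-path. $\mathcal{R}_H(X)$ is the set of nodes reachable from $X$ in $H$, including $X$. The shadows are $f_G(M):=V(G\setminus M)\setminus\mathcal{R}_{G\setminus M}(T)$, and $r_G(M):=$ the set of $v\in V(G)\setminus M$ with no path to $T$ in $G\setminus M$. For $X,Y\subseteq V(G)$, an $X\rightarrow Y$ separator is a set $S\subseteq V(G)\setminus V^\infty$ such that $G\setminus S$ has no path from $X$ to $Y$. An $X\rightarrow Y$ separator $S'$ dominates an $X\rightarrow Y$ separator $S$ if $|S'|\le|S|$ and $\mathcal{R}_{G\setminus S}(X)\subsetneq\mathcal{R}_{G\setminus S'}(X)$. An important $X\rightarrow Y$ separator is an inclusion-minimal $X\rightarrow Y$ separator that is dominated by no other $X\rightarrow Y$ separator. *)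

(* Defs.v *)
From mathcomp Require Import all_boot.
Set Implicit Arguments. Unset Strict Implicit. Unset Printing Implicit Defensive.

Section OMNC.
Variables (V : finType) (e : rel V).

Definition dag : Prop :=
  forall (x : V) (s : seq V), path e x s -> last x s = x -> s = [::].

(* A simple directed path x :: s (size s = number of edges) is an odd
   T-path if its ends are in T and it has an odd number of edges. *)
Definition odd_T_path (T : {set V}) (x : V) (s : seq V) : Prop :=
  [/\ path e x s, uniq (x :: s), x \in T, last x s \in T & odd (size s)].

Definition solution (Vinf T M : {set V}) : Prop :=
  M \subset ~: Vinf /\
  forall x s, odd_T_path T x s -> exists2 y, y \in x :: s & y \in M.

Definition edel (S : {set V}) : rel V :=
  [rel a b | [&& e a b, a \notin S & b \notin S]].

(* R_{G\S}(X): nodes of G \ S reachable in G \ S from X (including X \ S). *)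
Definition reach (S X : {set V}) : {set V} :=
  [set y | (y \notin S) && [exists x in X, (x \notin S) && connect (edel S) x y]].

Definition fshadow (T M : {set V}) : {set V} := (~: M) :\: reach M T.
Definition rshadow (T M : {set V}) : {set V} :=
  [set w | (w \notin M) &&
           ~~ [exists t in T, (t \notin M) && connect (edel M) w t]].

Definition separator (Vinf X Y S : {set V}) : Prop :=
  S \subset ~: Vinf /\ [disjoint reach S X & Y].

Definition dominates (X S' S : {set V}) : Prop :=
  #|S'| <= #|S| /\ reach S X \proper reach S' X.

Definition important (Vinf X Y S : {set V}) : Prop :=
  [/\ separator Vinf X Y S,
      (forall S' : {set V}, S' \proper S -> ~ separator Vinf X Y S') &
      (forall S' : {set V}, separator Vinf X Y S' -> ~ dominates X S' S)].

End OMNC.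

(* Main.v *)
Require Import Defs.
From mathcomp Require Import all_boot zify.
Set Implicit Arguments. Unset Strict Implicit. Unset Printing Implicit Defensive.
Section H.
Variables (V : finType) (e : rel V).

Lemma connect_closed (r : rel V) (C : {set V}) x y :
  x \in C -> (forall a b, a \in C -> r a b -> b \in C) -> connect r x y -> y \in C.
Proof.
move=> xC cl /connectP [p pth ->]; elim: p x xC pth => //= z p IH x xC /andP[rxz pz].
exact: IH (cl _ _ xC rxz) pz.
Qed.

Lemma path_exit (A : {set V}) x s : path e x s -> last x s \notin A ->
  (exists2 y, y \in x :: s & y \in A) ->
  exists a b, [/\ a \in A, b \notin A, e a b & b \in x :: s].
Proof.
elim: s x => [|z s IH] x /=.
  move=> _ xA [y]; rewrite inE => /eqP -> yA; by rewrite yA in xA.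
move=> /andP[exz pz] lA [y yin yA].
case: (boolP (x \in A)) => xA.
  case: (boolP (z \in A)) => zA.
    have [a [b [aA bA ab bin]]] := IH z pz lA (ex_intro2 _ _ z (mem_head _ _) zA).
    by exists a, b; split => //; rewrite inE bin orbT.
  by exists x, z; split => //; rewrite !inE eqxx orbT.
have yin' : y \in z :: s.
  move: yin; rewrite inE => /orP[/eqP yx|//]; by rewrite -yx yA in xA.
have [a [b [aA bA ab bin]]] := IH z pz lA (ex_intro2 _ _ y yin' yA).
by exists a, b; split => //; rewrite inE bin orbT.
Qed.

Lemma reach1P (S : {set V}) v y : reflect [/\ y \notin S, v \notin S & connect (edel e S) v y]
  (y \in reach e S [set v]).
Proof.
rewrite inE; apply: (iffP andP) => [[yS /existsP[x /and3P[]]] | [yS vS c]].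
  by rewrite inE => /eqP -> vS c; split.
by split => //; apply/existsP; exists v; rewrite inE eqxx vS c.
Qed.

Lemma reach_step (S : {set V}) v a b : a \in reach e S [set v] -> e a b -> b \notin S ->
  b \in reach e S [set v].
Proof.
move=> /reach1P [aS vS c] ab bS; apply/reach1P; split => //.
apply: connect_trans c (connect1 _); by rewrite /edel /= ab aS bS.
Qed.

End H.

Theorem lemma2p9 (V : finType) (e : rel V) (Vinf T : {set V}) (k : nat)
  (M : {set V}) (v : V) :
  dag e -> T \subset Vinf ->
  solution e Vinf T M ->
  v \in rshadow e T M ->
  ~ (exists S : {set V}, S \subset M /\ important e Vinf [set v] T S) ->
  exists M' : {set V},
    [/\ solution e Vinf T M',
        #|M'| <= #|M|,
        rshadow e T M :|: fshadow e T M :|: M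
          \subset rshadow e T M' :|: fshadow e T M' :|: M'
      & rshadow e T M \proper rshadow e T M'].
Proof.
move=> _ TVinf [MVinf Msol] vW noimp.
have TM : forall t, t \in T -> t \notin M.
  move=> t tT; apply/negP => tM.
  by have := subsetP MVinf t tM; rewrite inE (subsetP TVinf t tT).
have vM : v \notin M by move: vW; rewrite inE => /andP[].
set W := rshadow e T M.
set R := reach e M [set v].
have vR : v \in R by apply/reach1P; split => //; exact: connect0.
have RT : forall y, y \in R -> y \notin T.
  move=> y /reach1P [yM _ c]; apply/negP => yT.
  move: vW; rewrite inE => /andP[_ /negP]; apply.
  by apply/existsP; exists y; rewrite yT yM c.
set B := [set b in M | [exists r in R, e r b]].
have BM : B \subset M by apply/subsetP => b; rewrite inE => /andP[].
have reachB : reach e B [set v] \subset R.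
  apply/subsetP => y /reach1P [_ _ c].
  apply: (connect_closed vR _ c) => a b aR /and3P[ab _ bB].
  have bM : b \notin M.
    apply/negP => bM; move/negP: bB; apply; rewrite inE bM /=.
    by apply/existsP; exists a; rewrite aR ab.
  move/reach1P: aR => [aM _ ca]; apply/reach1P; split => //.
  apply: connect_trans ca (connect1 _); by rewrite /edel /= ab aM bM.
have sepB : separator e Vinf [set v] T B.
  split; first exact: subset_trans BM MVinf.
  rewrite disjoint_subset; apply/subsetP => y /(subsetP reachB) yR; rewrite inE; exact: RT.
have RS : forall S : {set V}, S \subset M -> R \subset reach e S [set v].
  move=> S SM; apply/subsetP => y /reach1P [yM _ c].
  have nS : forall z, z \notin M -> z \notin S.
    by move=> z zM; apply/negP => /(subsetP SM); apply/negP.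
  apply/reach1P; split; [exact: nS | exact: nS |].
  apply: connect_sub c => a b /and3P[ab aM bM]; apply: connect1.
  by rewrite /edel /= ab !nS.

set P := [pred S : {set V} | [&& S \subset B, S \subset ~: Vinf & [disjoint reach e S [set v] & T]]].
have PB : P B by rewrite /= subxx; case: sepB => -> ->.
have [S [SB sepS minS]] : exists S : {set V}, [/\ S \subset B, separator e Vinf [set v] T S &
    forall S2 : {set V}, S2 \subset B -> separator e Vinf [set v] T S2 -> #|S| <= #|S2|].
  case: (arg_minnP (fun S : {set V} => #|S|) PB) => S /and3P[SB S1 S2] Smin.
  exists S; split => // S3 S3B [h1 h2]; apply: Smin; by rewrite /= S3B h1 h2.
have SM : S \subset M := subset_trans SB BM.
have [S' [sepS' cardS' RS']] : exists S' : {set V}, [/\ separator e Vinf [set v] T S',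
    #|S'| <= #|B| & R \proper reach e S' [set v]].
  case: (boolP (R \proper reach e S [set v])) => H.
    by exists S; split => //; exact: subset_leq_card.
  have eqR : reach e S [set v] = R.
    by apply/eqP; rewrite eqEsubset; move: H; rewrite properE RS //= => /negbNE ->.
  case: (boolP [exists S2 : {set V}, [&& S2 \subset ~: Vinf,
      [disjoint reach e S2 [set v] & T], #|S2| <= #|S| &
      reach e S [set v] \proper reach e S2 [set v]]]).
    move=> /existsP [S2 /and4P[h1 h2 h3 h4]]; exists S2; split => //.
      exact: leq_trans h3 (subset_leq_card SB).
    by rewrite -eqR.
  move=> /negP Hn; exfalso; apply: noimp; exists S; split => //; split => //.
    move=> S2 S2S sep2; have := minS S2 (subset_trans (proper_sub S2S) SB) sep2.
    by rewrite leqNgt proper_card.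
  move=> S2 [h1 h2] [h3 h4]; apply: Hn; apply/existsP; exists S2.
  by rewrite h1 h2 h3 h4.

set R' := reach e S' [set v].
have hRR' : R \subset R' := proper_sub RS'.
set A := R' :|: W.
set NA := [set y | [exists a in A, e a y]].
set M' := (M :|: NA) :\: A.
have WM : forall w, w \in W -> w \notin M by move=> w; rewrite inE => /andP[].
have AT : forall t, t \in T -> t \notin A.
  move=> t tT; rewrite inE negb_or; apply/andP; split.
    apply/negP => tR; case: sepS' => _ /disjointFr /(_ tR); by rewrite tT.
  rewrite inE negb_and; apply/orP; right; rewrite negbK; apply/existsP; exists t.
  by rewrite tT TM // connect0.
have M'E : forall y, (y \in M') = (y \notin A) && ((y \in M) || (y \in NA)).
  by move=> y; rewrite !inE.
have closA : forall a b, a \in A -> edel e M' a b -> b \in A.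
  move=> a b aA /and3P[ab _ bM']; case: (boolP (b \in A)) => // bA; move: bM'.
  rewrite M'E (negbTE bA) /= negb_or => /andP[_ /negP H]; exfalso; apply: H; rewrite inE.
  by apply/existsP; exists a; rewrite aA ab.
have AinrM' : A \subset rshadow e T M'.
  apply/subsetP => a aA; rewrite inE M'E aA /=; apply/negP => /existsP[t /and3P[tT _ c]].
  by have := connect_closed aA closA c; apply/negP; exact: AT.
have NAsub : forall y, y \in NA -> y \notin A -> (y \in S') || (y \in M).
  move=> y; rewrite inE => /existsP[a /andP[aA ay]] yA.
  case: (boolP (y \in S')) => //= yS; move: aA; rewrite inE => /orP[aR|aW].
    by have := reach_step aR ay yS => yR; move: yA; rewrite inE yR.
  case: (boolP (y \in M)) => // yM; move: yA; rewrite inE negb_or => /andP[_ /negP H]; exfalso; apply: H.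
  rewrite inE yM /=; apply/negP => /existsP[t /and3P[tT tM c]].
  move: aW; rewrite inE => /andP[aM /negP]; apply; apply/existsP; exists t.
  rewrite tT tM /=; apply: connect_trans c; apply: connect1.
  by rewrite /edel /= ay aM yM.
have mR' : [exists m, (m \in M) && (m \in R')].
  case: (boolP [exists m, (m \in M) && (m \in R')]) => // /negP Hn; exfalso; move/properP: RS' => [_ [y yR' yR]].
  move/negP: yR; apply; move/reach1P: (yR') => [_ _ c].
  apply: (connect_closed vR _ c) => a b aR /and3P[ab aS bS].
  have bR' : b \in R' := reach_step (subsetP hRR' a aR) ab bS.
  have bM : b \notin M by apply/negP => bM; apply: Hn; apply/existsP; exists b; rewrite bM.
  move/reach1P: aR => [aM _ ca]; apply/reach1P; split => //.
  apply: connect_trans ca (connect1 _); by rewrite /edel /= ab aM bM.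
exists M'; split.

- split.
    apply/subsetP => y; rewrite M'E => /andP[yA /orP[yM|yNA]].
      exact: (subsetP MVinf).
    case/orP: (NAsub y yNA yA) => [yS|yM]; last exact: (subsetP MVinf).
    by case: sepS' => h _; exact: (subsetP h).
  move=> x s Pp; have [y yin yM] := Msol x s Pp; case: Pp => pth _ _ lT _.
  case: (boolP (y \in A)) => yA.
    have [a [b [aA bA ab bin]]] := path_exit pth (AT _ lT) (ex_intro2 _ _ y yin yA).
    exists b => //; rewrite M'E bA /=; apply/orP; right.
    by rewrite inE; apply/existsP; exists a; rewrite aA ab.
  by exists y => //; rewrite M'E yA yM.
- have sub : M' \subset (M :\: A) :|: (S' :\: M).
    apply/subsetP => y; rewrite M'E => /andP[yA /orP[yM|yNA]].
      by rewrite in_setU in_setD yA yM.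
    case/orP: (NAsub y yNA yA) => [yS|yM]; last by rewrite in_setU in_setD yA yM.
    case: (boolP (y \in M)) => yM; first by rewrite in_setU in_setD yA yM.
    by rewrite !inE yM yS orbT.
  have sub2 : B \subset (M :&: A) :|: (S' :&: M).
    apply/subsetP => b; rewrite inE => /andP[bM /existsP[r /andP[rR rb]]].
    case: (boolP (b \in S')) => bS; first by rewrite !inE bS bM orbT.
    have bR' := reach_step (subsetP hRR' r rR) rb bS.
    by rewrite in_setU in_setI bM in_setU bR'.
  have c1 := leq_trans (subset_leq_card sub) (leq_card_setU _ _).
  have c2 := leq_trans (subset_leq_card sub2) (leq_card_setU _ _).
  have c3 := cardsID M S'. have c4 := cardsID A M.
  move: c1 c2 c3 c4 cardS'.
  move: #|M'| #|M :\: A| #|S' :\: M| #|B| #|M :&: A| #|S' :&: M| #|S'| #|M|.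
  clear; move=> a b c d f g h i; lia.
- apply/subsetP => x Hx.
  case: (boolP (x \in A)) => xA; first by rewrite !in_setU (subsetP AinrM' x xA).
  case: (boolP (x \in M)) => xM; first by rewrite !in_setU M'E xA xM orbT.
  move: Hx; rewrite !in_setU (negbTE xM) orbF => /orP[xW|xf].
    by move: xA; rewrite inE xW orbT.
  case: (boolP (x \in M')) => xM'; first by rewrite orbT.
  case: (boolP (x \in reach e M' T)) => xr; last first.
    by apply/orP; left; apply/orP; right; rewrite inE xr inE xM'.
  exfalso; move: xr; rewrite inE => /andP[_ /existsP[t /and3P[tT tM' c]]].
  set C := [set y | (y \in A) || ((y \notin M) && connect (edel e M) t y)].
  have tC : t \in C by rewrite inE TM // connect0 orbT.
  have := connect_closed tC _ c; rewrite inE (negbTE xA) /=.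
  case/(_ _)/andP.
    move=> a b; rewrite inE => /orP[aA|/andP[aM ca]] ab'.
      by rewrite inE (closA a b aA ab').
    case: (boolP (b \in A)) => bA; first by rewrite inE bA.
    move: ab' => /and3P[ab _ bM'].
    have bM : b \notin M by apply/negP => bM; move: bM'; rewrite M'E bA bM.
    rewrite in_set bM /= orbC; apply/orP; left; apply: connect_trans ca (connect1 _).
    by rewrite /edel /= ab aM bM.
  move=> _ c'; move: xf; rewrite !inE xM andbT => /negP; apply.
  by rewrite andTb; apply/existsP; exists t; rewrite tT TM.
- apply/properP; split.
    apply: subset_trans AinrM'; apply/subsetP => w wW; by rewrite inE wW orbT.
  case/existsP: mR' => m /andP[mM mR'].
  exists m; first by apply: (subsetP AinrM'); rewrite inE mR'.
  by apply/negP => /WM; rewrite mM.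
Qed.
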